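(* Let $1<p<\infty$ with $p\neq2$. For each $r\ge1$ let $T_r$ be the diagonal operator on $l^2([1,r])$ with diagonal entries $\frac1r,\frac2r,\ldots,\frac rr$. Let $\mathcal{Y}=\big(\bigoplus_{r\ge1}l^2([1,r])\big)_{l^p}$ and $T=\bigoplus_{r\ge1}T_r\in B(\mathcal{Y})$. Let $D$ be a (bounded) diagonal operator on $l^p$. Then there is no operator $L:\mathcal{Y}\to l^p$ such that $\inf\{\|Lx\|:\|x\|=1\}>0$ and $DL-LT$ is compact.
   Context: $l^2([1,r])$ is the $r$-dimensional Hilbert space $\ell^2(\{1,\ldots,r\})$; $(\bigoplus\cdot)_{l^p}$ denotes the $l^p$-direct sum. A diagonal operator on $l^p$ is $(x_1,x_2,\ldots)\mapsto(w_1x_1,w_2x_2,\ldots)$ with bounded scalars $w_i$. *)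

(* Defs.v *)
From Stdlib Require Import Reals ClassicalEpsilon.
Open Scope R_scope.

Definition Cx : Type := (R * R)%type.
Definition Cadd (z w : Cx) : Cx := (fst z + fst w, snd z + snd w).
Definition Csub (z w : Cx) : Cx := (fst z - fst w, snd z - snd w).
Definition Cmul (z w : Cx) : Cx :=
  (fst z * fst w - snd z * snd w, fst z * snd w + snd z * fst w).
Definition RtoC (a : R) : Cx := (a, 0).
Definition Cmod (z : Cx) : R := sqrt (fst z ^ 2 + snd z ^ 2).

(* ---------- real powers of nonnegative reals (0 ^ q = 0 for q > 0) ---------- *)
Definition rpow (a q : R) : R := if Rlt_dec 0 a then Rpower a q else 0.

Definition summable (a : nat -> R) : Prop := exists l, infinite_sum a l.
Definition series (a : nat -> R) : R :=
  epsilon (inhabits 0) (fun l => infinite_sum a l).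

Definition in_lp (p : R) (x : nat -> Cx) : Prop :=
  summable (fun n => rpow (Cmod (x n)) p).
Definition lp_norm (p : R) (x : nat -> Cx) : R :=
  rpow (series (fun n => rpow (Cmod (x n)) p)) (1 / p).

(* ---------- Y = (⊕_{r>=1} l^2([1,r]))_{l^p} ----------
   An element is y : nat -> nat -> Cx; block k (k = r-1) is the vector
   (y k 0, ..., y k k) in l^2([1,k+1]); entries y k i with i > k must vanish. *)
Definition block_norm (k : nat) (v : nat -> Cx) : R :=
  sqrt (sum_f_R0 (fun i => Cmod (v i) ^ 2) k).
Definition in_Y (p : R) (y : nat -> nat -> Cx) : Prop :=
  (forall k i : nat, (k < i)%nat -> y k i = (0, 0)) /\
  summable (fun k => rpow (block_norm k (y k)) p).
Definition Y_norm (p : R) (y : nat -> nat -> Cx) : R :=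
  rpow (series (fun k => rpow (block_norm k (y k)) p)) (1 / p).

Definition Y_lin (a : Cx) (y : nat -> nat -> Cx) (b : Cx) (z : nat -> nat -> Cx) :
  nat -> nat -> Cx := fun k i => Cadd (Cmul a (y k i)) (Cmul b (z k i)).

(* T = ⊕ T_r, T_r = diag(1/r, 2/r, ..., r/r); block k has r = k+1,
   entry i (0-based) is multiplied by (i+1)/(k+1). *)
Definition Top (y : nat -> nat -> Cx) : nat -> nat -> Cx :=
  fun k i => Cmul (RtoC (INR (S i) / INR (S k))) (y k i).

Definition bounded_weights (w : nat -> Cx) : Prop :=
  exists B : R, forall n, Cmod (w n) <= B.
Definition Dop (w : nat -> Cx) (x : nat -> Cx) : nat -> Cx :=
  fun n => Cmul (w n) (x n).

(* L : Y -> l^p is a bounded linear operator (only its values on Y matter) *)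
Definition bounded_linear_Y_lp (p : R)
    (L : (nat -> nat -> Cx) -> (nat -> Cx)) : Prop :=
  (forall y, in_Y p y -> in_lp p (L y)) /\
  (forall a b y z, in_Y p y -> in_Y p z -> forall n,
      L (Y_lin a y b z) n = Cadd (Cmul a (L y n)) (Cmul b (L z n))) /\
  (exists M : R, forall y, in_Y p y -> lp_norm p (L y) <= M * Y_norm p y).

Definition compact_Y_lp (p : R) (K : (nat -> nat -> Cx) -> (nat -> Cx)) : Prop :=
  forall ys : nat -> (nat -> nat -> Cx),
    (forall m, in_Y p (ys m) /\ Y_norm p (ys m) <= 1) ->
    exists (phi : nat -> nat) (z : nat -> Cx),
      (forall m, (phi m < phi (S m))%nat) /\ in_lp p z /\
      Un_cv (fun m => lp_norm p (fun n => Csub (K (ys (phi m)) n) (z n))) 0.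

(* Main.v *)
Require Import Defs.
From Stdlib Require Import Reals.
From Stdlib Require Import Reals Lra Lia Psatz ZArith ClassicalEpsilon FunctionalExtensionality.
From Coquelicot Require Import Coquelicot.
Import Defs.
Open Scope R_scope.

Lemma rpow_ge0 a q : 0 <= rpow a q.
Proof. unfold rpow; destruct (Rlt_dec 0 a); [left; apply exp_pos|lra]. Qed.

Lemma rpow_0 q : rpow 0 q = 0.
Proof. unfold rpow; destruct (Rlt_dec 0 0); lra. Qed.

Lemma rpow_pos a q : 0 < a -> rpow a q = Rpower a q.
Proof. intros; unfold rpow; destruct (Rlt_dec 0 a); lra. Qed.

Lemma rpow_gt0 a q : 0 < a -> 0 < rpow a q.
Proof. intros; rewrite rpow_pos; auto; apply exp_pos. Qed.

Lemma rpow_le a b q : 0 <= q -> 0 <= a <= b -> rpow a q <= rpow b q.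
Proof.
  intros Hq [Ha Hab]. destruct Ha as [Ha|Ha].
  - rewrite !rpow_pos by lra. apply Rle_Rpower_l; lra.
  - subst; rewrite rpow_0; apply rpow_ge0.
Qed.

Lemma rpow_lt a b q : 0 < q -> 0 <= a < b -> rpow a q < rpow b q.
Proof.
  intros Hq [Ha Hab]. destruct Ha as [Ha|Ha].
  - rewrite !rpow_pos by lra. apply Rlt_Rpower_l; lra.
  - subst; rewrite rpow_0; apply rpow_gt0; lra.
Qed.

Lemma rpow_mult a b q : 0 <= a -> 0 <= b -> rpow (a*b) q = rpow a q * rpow b q.
Proof.
  intros Ha Hb. destruct Ha as [Ha|Ha]; [destruct Hb as [Hb|Hb]|].
  - rewrite !rpow_pos by nra. rewrite Rpower_mult_distr; auto.
  - subst. rewrite Rmult_0_r, !rpow_0; ring.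
  - subst. rewrite Rmult_0_l, !rpow_0; ring.
Qed.

Lemma rpow_rpow a q s : 0 <= a -> rpow (rpow a q) s = rpow a (q*s).
Proof.
  intros [Ha|Ha].
  - rewrite (rpow_pos a q) by auto. rewrite rpow_pos by apply exp_pos.
    rewrite rpow_pos by auto. apply Rpower_mult.
  - subst; rewrite !rpow_0; auto.
Qed.

Lemma rpow_1 a : 0 <= a -> rpow a 1 = a.
Proof. intros [Ha|Ha]. rewrite rpow_pos by auto; apply Rpower_1; auto. subst; apply rpow_0. Qed.

Lemma rpow_one q : rpow 1 q = 1.
Proof. rewrite rpow_pos by lra. unfold Rpower. rewrite ln_1, Rmult_0_r. apply exp_0. Qed.

Lemma rpow_inv1 a q : 0 < q -> 0 <= a -> rpow (rpow a q) (1/q) = a.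
Proof. intros. rewrite rpow_rpow by auto. replace (q*(1/q)) with 1 by (field; lra). apply rpow_1; auto. Qed.

Lemma rpow_inv2 a q : 0 < q -> 0 <= a -> rpow (rpow a (1/q)) q = a.
Proof. intros. rewrite rpow_rpow by auto. replace (1/q*q) with 1 by (field; lra). apply rpow_1; auto. Qed.

Lemma rpow_add_le a b q : 0 < q -> 0 <= a -> 0 <= b ->
  rpow (a+b) q <= rpow 2 q * (rpow a q + rpow b q).
Proof.
  intros Hq Ha Hb.
  apply Rle_trans with (rpow (2 * Rmax a b) q).
  { apply rpow_le; try lra. split; [lra|]. unfold Rmax; destruct (Rle_dec a b); lra. }
  rewrite rpow_mult by (try lra; unfold Rmax; destruct (Rle_dec a b); lra).
  apply Rmult_le_compat_l; [apply rpow_ge0|].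
  pose proof (rpow_ge0 a q); pose proof (rpow_ge0 b q).
  unfold Rmax; destruct (Rle_dec a b); lra.
Qed.

Lemma rpow2_ge1 q : 0 <= q -> 1 <= rpow 2 q.
Proof. intros. rewrite <- (rpow_one q). apply rpow_le; lra. Qed.

Lemma summable_ex a : summable a <-> ex_series a.
Proof.
  split.
  - intros [l Hl]. exists l. apply is_series_Reals; auto.
  - intros [l Hl]. exists l. apply is_series_Reals; auto.
Qed.

Lemma series_Series a : summable a -> series a = Series a.
Proof.
  intros Hs. unfold series.
  pose proof (epsilon_spec (inhabits 0) (fun l => infinite_sum a l) Hs) as H.
  symmetry. apply is_series_unique. apply is_series_Reals. auto.
Qed.

Lemma series_eq a l : infinite_sum a l -> series a = l.
Proof.
  intros H. rewrite series_Series by (exists l; auto).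
  apply is_series_unique. apply is_series_Reals; auto.
Qed.

Lemma Cmod_add_le z w : Cmod (Cadd z w) <= Cmod z + Cmod w.
Proof. exact (Cmod_triangle z w). Qed.
Lemma Cmod_mul z w : Cmod (Cmul z w) = Cmod z * Cmod w.
Proof. exact (Coquelicot.Complex.Cmod_mult z w). Qed.
Lemma Cmod_ge0 z : 0 <= Cmod z.
Proof. exact (Cmod_ge_0 z). Qed.
Lemma Cmod_RtoC a : Cmod (RtoC a) = Rabs a.
Proof. exact (Cmod_R a). Qed.
Lemma Cmod_sub_le z w : Cmod (Csub z w) <= Cmod z + Cmod w.
Proof.
  replace (Csub z w) with (Cadd z (Cmul (RtoC (-1)) w)).
  - eapply Rle_trans; [apply Cmod_add_le|]. rewrite Cmod_mul, Cmod_RtoC.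
    rewrite (Rabs_left (-1)) by lra; lra.
  - destruct z, w; unfold Cadd, Csub, Cmul, RtoC; simpl; f_equal; ring.
Qed.
Lemma Cmod_0 : Cmod (0,0) = 0.
Proof. unfold Cmod. replace (fst (0,0) ^ 2 + snd (0,0) ^ 2) with 0 by (simpl; ring). apply sqrt_0. Qed.
Lemma Cmod_fst z : Rabs (fst z) <= Cmod z.
Proof. exact (re_le_Cmod z). Qed.
Lemma Cmod_eq0 z : Cmod z = 0 -> z = (0,0).
Proof. intros H. apply (Cmod_eq_0 z) in H. exact H. Qed.

Lemma exs_le a b : (forall n, 0 <= a n <= b n) -> ex_series b -> ex_series a.
Proof.
  intros H Hb. apply (ex_series_le a b); auto.
  intros n. change (norm (a n)) with (Rabs (a n)). rewrite Rabs_pos_eq; apply H.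
Qed.

Lemma exs_plus a b : ex_series a -> ex_series b -> ex_series (fun n => a n + b n).
Proof. intros. apply (ex_series_plus a b); auto. Qed.

Lemma exs_scal c a : ex_series a -> ex_series (fun n => c * a n).
Proof. intros. apply (ex_series_scal c a); auto. Qed.


Lemma sum_stable a N : (forall n, (N < n)%nat -> a n = 0) ->
  forall n, (N <= n)%nat -> sum_f_R0 a n = sum_f_R0 a N.
Proof.
  intros H n Hn. induction Hn; auto. simpl. rewrite IHHn, H by lia. ring.
Qed.

Lemma inf_sum_fin a N : (forall n, (N < n)%nat -> a n = 0) -> infinite_sum a (sum_f_R0 a N).
Proof.
  intros H eps He. exists N. intros n Hn. unfold Rdist.
  rewrite (sum_stable a N H n) by lia. rewrite Rminus_eq_0, Rabs_R0; auto.
Qed.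

Lemma Series_fin a N : (forall n, (N < n)%nat -> a n = 0) ->
  ex_series a /\ Series a = sum_f_R0 a N.
Proof.
  intros H. pose proof (inf_sum_fin a N H) as Hi. apply is_series_Reals in Hi.
  split; [exists (sum_f_R0 a N); auto|]. apply is_series_unique; auto.
Qed.

Lemma Series_zero : Series (fun _ => 0) = 0.
Proof. destruct (Series_fin (fun _ => 0) 0 (fun _ _ => eq_refl)) as [_ H]. rewrite H. simpl. auto. Qed.

Lemma Series_ge0 a : (forall n, 0 <= a n) -> ex_series a -> 0 <= Series a.
Proof.
  intros H Ha. rewrite <- Series_zero. apply Series_le; auto. intros; split; [lra|auto].
Qed.

Lemma sum_le_Series a N : (forall n, 0 <= a n) -> ex_series a -> sum_f_R0 a N <= Series a.
Proof.
  intros H [l Hl]. rewrite (is_series_unique a l Hl).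
  apply is_series_Reals in Hl.
  apply (growing_ineq (fun n => sum_f_R0 a n)); auto.
  intros n. simpl. pose proof (H (S n)). lra.
Qed.

Lemma term_le_Series a n : (forall n, 0 <= a n) -> ex_series a -> a n <= Series a.
Proof.
  intros H Ha. eapply Rle_trans; [|apply (sum_le_Series a n); auto].
  destruct n; simpl; [lra|]. pose proof (cond_pos_sum a n). 
  assert (0 <= sum_f_R0 a n) by (apply cond_pos_sum; auto). lra.
Qed.

Lemma Series_fsum (f : nat -> nat -> R) k : (forall i, ex_series (f i)) ->
  ex_series (fun n => sum_f_R0 (fun i => f i n) k) /\
  Series (fun n => sum_f_R0 (fun i => f i n) k) = sum_f_R0 (fun i => Series (f i)) k.
Proof.
  intros H. induction k as [|k IH]; simpl.
  - split; auto.
  - destruct IH as [IH1 IH2]. split.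
    + apply exs_plus; auto.
    + rewrite Series_plus; auto. rewrite IH2; auto.
Qed.

Lemma Series_le' a b : (forall n, 0 <= a n) -> (forall n, a n <= b n) -> ex_series b ->
  Series a <= Series b.
Proof. intros. apply Series_le; auto. Qed.

Definition Pl (p : R) (x : nat -> Cx) : R := Series (fun n => rpow (Cmod (x n)) p).
Definition Ysum (p : R) (y : nat -> nat -> Cx) : R :=
  Series (fun k => rpow (block_norm k (y k)) p).

Lemma in_lp_ex p x : in_lp p x -> ex_series (fun n => rpow (Cmod (x n)) p).
Proof. intros H; apply summable_ex; exact H. Qed.
Lemma in_Y_ex p y : in_Y p y -> ex_series (fun k => rpow (block_norm k (y k)) p).
Proof. intros [_ H]; apply summable_ex; exact H. Qed.

Lemma Pl_ge0 p x : in_lp p x -> 0 <= Pl p x.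
Proof. intros H. apply Series_ge0; [intros; apply rpow_ge0|apply in_lp_ex; auto]. Qed.
Lemma Ysum_ge0 p y : in_Y p y -> 0 <= Ysum p y.
Proof. intros H. apply Series_ge0; [intros; apply rpow_ge0|apply in_Y_ex; auto]. Qed.

Lemma lp_norm_Pl p x : in_lp p x -> lp_norm p x = rpow (Pl p x) (1/p).
Proof. intros H. unfold lp_norm, Pl. rewrite series_Series; auto. Qed.
Lemma Y_norm_Ysum p y : in_Y p y -> Y_norm p y = rpow (Ysum p y) (1/p).
Proof. intros H. unfold Y_norm, Ysum. rewrite series_Series; auto. apply H. Qed.

Lemma Pl_le p x t : 0 < p -> in_lp p x -> 0 <= t -> lp_norm p x <= t -> Pl p x <= rpow t p.
Proof.
  intros Hp H Ht Hn. rewrite lp_norm_Pl in Hn by auto.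
  rewrite <- (rpow_inv2 (Pl p x) p) by (auto; apply Pl_ge0; auto).
  apply rpow_le; [lra|]. split; auto. apply rpow_ge0.
Qed.

Lemma Pl_ge p x c : 0 < p -> in_lp p x -> 0 <= c -> c <= lp_norm p x -> rpow c p <= Pl p x.
Proof.
  intros Hp H Hc Hn. rewrite lp_norm_Pl in Hn by auto.
  rewrite <- (rpow_inv2 (Pl p x) p) by (auto; apply Pl_ge0; auto).
  apply rpow_le; lra.
Qed.

Lemma coord_le p x n : 0 < p -> in_lp p x -> Cmod (x n) <= lp_norm p x.
Proof.
  intros Hp H. rewrite lp_norm_Pl by auto.
  rewrite <- (rpow_inv1 (Cmod (x n)) p) by (auto; apply Cmod_ge0).
  apply rpow_le. { apply Rlt_le, Rdiv_lt_0_compat; lra. }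
  split; [apply rpow_ge0|].
  apply (term_le_Series (fun n => rpow (Cmod (x n)) p)); [intros; apply rpow_ge0|apply in_lp_ex; auto].
Qed.

Definition ebv (k0 i0 : nat) : nat -> nat -> Cx :=
  fun k i => if Nat.eqb k k0 then (if Nat.eqb i i0 then (1,0) else (0,0)) else (0,0).

Lemma Cmod_1 : Cmod (1,0) = 1.
Proof. change (1,0) with (RtoC 1). rewrite Cmod_RtoC. apply Rabs_R1. Qed.

Lemma sum_ind j v N : sum_f_R0 (fun i => if Nat.eqb i j then v else 0) N =
  if Nat.leb j N then v else 0.
Proof.
  induction N as [|N IH].
  - simpl. destruct j; simpl; auto.
  - change (sum_f_R0 ?f (S N)) with (sum_f_R0 f N + f (S N)).
    rewrite IH. cbv beta.
    destruct (Nat.leb_spec j N); destruct (Nat.eqb_spec (S N) j);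
    destruct (Nat.leb_spec j (S N)); try lia; ring.
Qed.

Lemma sum_f_R0_ext f g N : (forall i, (i <= N)%nat -> f i = g i) ->
  sum_f_R0 f N = sum_f_R0 g N.
Proof.
  intros H. induction N as [|N IH]; simpl; [apply H; lia|].
  rewrite IH by (intros; apply H; lia). rewrite H by lia. auto.
Qed.

Lemma block_norm_ebv k0 i0 k : (i0 <= k0)%nat ->
  block_norm k (ebv k0 i0 k) = if Nat.eqb k k0 then 1 else 0.
Proof.
  intros H. unfold block_norm, ebv. destruct (Nat.eqb k k0) eqn:E.
  - apply Nat.eqb_eq in E; subst.
    rewrite (sum_f_R0_ext _ (fun i => if Nat.eqb i i0 then 1 else 0)).
    + rewrite sum_ind. replace (Nat.leb i0 k0) with true by (symmetry; apply Nat.leb_le; auto).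
      apply sqrt_1.
    + intros i _. destruct (Nat.eqb i i0); [rewrite Cmod_1|rewrite Cmod_0]; ring.
  - rewrite (sum_f_R0_ext _ (fun _ => 0)).
    + rewrite sum_cte. rewrite Rmult_0_l. apply sqrt_0.
    + intros; rewrite Cmod_0; ring.
Qed.

Lemma Series_delta a k0 v : (forall k, a k = if Nat.eqb k k0 then v else 0) ->
  ex_series a /\ Series a = v.
Proof.
  intros H. destruct (Series_fin a k0) as [H1 H2].
  { intros n Hn. rewrite H. destruct (Nat.eqb_spec n k0); auto; lia. }
  split; auto. rewrite H2. rewrite (sum_f_R0_ext _ (fun i => if Nat.eqb i k0 then v else 0)).
  - rewrite sum_ind. destruct (Nat.leb_spec k0 k0); auto; lia.
  - intros; apply H.
Qed.

Lemma ebv_Y p k0 i0 : 0 < p -> (i0 <= k0)%nat ->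
  in_Y p (ebv k0 i0) /\ Ysum p (ebv k0 i0) = 1 /\ Y_norm p (ebv k0 i0) = 1.
Proof.
  intros Hp Hi.
  assert (Hd : forall k, rpow (block_norm k (ebv k0 i0 k)) p = if Nat.eqb k k0 then 1 else 0).
  { intros k. rewrite block_norm_ebv by auto. destruct (Nat.eqb k k0); [apply rpow_one|apply rpow_0]. }
  destruct (Series_delta _ k0 1 Hd) as [H1 H2].
  assert (HY : in_Y p (ebv k0 i0)).
  { split.
    - intros k i Hki. unfold ebv. destruct (Nat.eqb_spec k k0); destruct (Nat.eqb_spec i i0); auto; lia.
    - apply summable_ex; auto. }
  split; [auto|]. split; [exact H2|].
  rewrite Y_norm_Ysum by auto. unfold Ysum. rewrite H2. apply rpow_one.
Qed.

Lemma Top_ebv k0 i0 : Top (ebv k0 i0) =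
  Y_lin (RtoC (INR (S i0) / INR (S k0))) (ebv k0 i0) (0,0) (ebv k0 i0).
Proof.
  apply functional_extensionality; intros k; apply functional_extensionality; intros i.
  unfold Top, Y_lin, ebv. destruct (Nat.eqb_spec k k0); destruct (Nat.eqb_spec i i0); subst;
  unfold Cmul, Cadd, RtoC; simpl; f_equal; ring.
Qed.

Lemma Top_le y k i : (forall k i, (k < i)%nat -> y k i = (0,0)) ->
  Cmod (Top y k i) <= Cmod (y k i).
Proof.
  intros H. unfold Top. rewrite Cmod_mul, Cmod_RtoC.
  destruct (Nat.lt_ge_cases k i) as [Hl|Hl].
  - rewrite H by auto. rewrite Cmod_0. lra.
  - pose proof (Cmod_ge0 (y k i)).
    assert (0 < INR (S k)) by (apply lt_0_INR; lia).
    assert (0 <= INR (S i) / INR (S k) <= 1).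
    { split. apply Rcomplements.Rdiv_le_0_compat; [apply pos_INR|auto].
      apply Rcomplements.Rle_div_l; auto. rewrite Rmult_1_l. apply le_INR; lia. }
    rewrite Rabs_pos_eq by lra. nra.
Qed.

Lemma block_norm_le k u v : (forall i, (i <= k)%nat -> Cmod (u i) <= Cmod (v i)) ->
  block_norm k u <= block_norm k v.
Proof.
  intros H. unfold block_norm. apply sqrt_le_1_alt. apply sum_Rle.
  intros i Hi. pose proof (H i Hi). pose proof (Cmod_ge0 (u i)). simpl. nra.
Qed.

Lemma block_norm_ge0 k u : 0 <= block_norm k u.
Proof. apply sqrt_pos. Qed.

Lemma Top_Y p y : 0 < p -> in_Y p y -> in_Y p (Top y) /\ Ysum p (Top y) <= Ysum p y.
Proof.
  intros Hp [Hz Hs].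
  assert (Hle : forall k, 0 <= rpow (block_norm k (Top y k)) p <= rpow (block_norm k (y k)) p).
  { intros k. split; [apply rpow_ge0|]. apply rpow_le; [lra|]. split; [apply block_norm_ge0|].
    apply block_norm_le. intros; apply Top_le; auto. }
  assert (Hex : ex_series (fun k => rpow (block_norm k (Top y k)) p)).
  { apply (exs_le _ _ Hle). apply summable_ex; auto. }
  split.
  - split.
    + intros k i Hki. unfold Top. rewrite Hz by auto. unfold Cmul; simpl; f_equal; ring.
    + apply summable_ex; auto.
  - apply Series_le; auto. apply summable_ex; auto.
Qed.

Record Hyps (p : R) (w : nat -> Cx) (B : R) (L : (nat -> nat -> Cx) -> nat -> Cx) (M : R) : Prop := {
  H_p : 1 < p;
  H_B : forall n, Cmod (w n) <= B;
  H_lp : forall y, in_Y p y -> in_lp p (L y);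
  H_lin : forall a b y z, in_Y p y -> in_Y p z -> forall n,
      L (Y_lin a y b z) n = Cadd (Cmul a (L y n)) (Cmul b (L z n));
  H_M : forall y, in_Y p y -> lp_norm p (L y) <= M * Y_norm p y;
  H_M0 : 0 <= M }.

Definition Kop (w : nat -> Cx) (L : (nat -> nat -> Cx) -> nat -> Cx) y n :=
  Csub (Dop w (L y) n) (L (Top y) n).

Lemma B_ge0 p w B L M : Hyps p w B L M -> 0 <= B.
Proof. intros H. pose proof (H_B _ _ _ _ _ H 0). pose proof (Cmod_ge0 (w 0%nat)). lra. Qed.

Lemma K_pt p w B L M y n : Hyps p w B L M ->
  Cmod (Kop w L y n) <= B * Cmod (L y n) + Cmod (L (Top y) n).
Proof.
  intros H. unfold Kop, Dop. eapply Rle_trans; [apply Cmod_sub_le|].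
  rewrite Cmod_mul. pose proof (H_B _ _ _ _ _ H n). pose proof (Cmod_ge0 (L y n)). nra.
Qed.

Lemma K_lp p w B L M y : Hyps p w B L M -> in_Y p y -> in_lp p (Kop w L y).
Proof.
  intros H Hy. pose proof (H_p _ _ _ _ _ H) as Hp. pose proof (B_ge0 _ _ _ _ _ H) as HB.
  destruct (Top_Y p y) as [HTy _]; auto; try lra.
  apply summable_ex.
  apply (exs_le _ (fun n => rpow 2 p * (rpow B p * rpow (Cmod (L y n)) p + rpow (Cmod (L (Top y) n)) p))).
  - intros n. split; [apply rpow_ge0|].
    eapply Rle_trans.
    + apply rpow_le; [lra|]. split; [apply Cmod_ge0|]. apply (K_pt p w B L M y n H).
    + rewrite <- rpow_mult by (auto; apply Cmod_ge0).
      apply rpow_add_le; try lra; try apply Cmod_ge0.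
      apply Rmult_le_pos; auto; apply Cmod_ge0.
  - apply exs_scal. apply exs_plus.
    + apply exs_scal. apply in_lp_ex. apply (H_lp _ _ _ _ _ H); auto.
    + apply in_lp_ex. apply (H_lp _ _ _ _ _ H); auto.
Qed.

Lemma Ynorm_Top p y : 0 < p -> in_Y p y -> Y_norm p (Top y) <= Y_norm p y.
Proof.
  intros Hp Hy. destruct (Top_Y p y) as [HT Hle]; auto.
  rewrite !Y_norm_Ysum by auto. apply rpow_le.
  { apply Rlt_le, Rdiv_lt_0_compat; lra. }
  split; auto. apply Ysum_ge0; auto.
Qed.

Lemma Ynorm_ge0 p y : 0 <= Y_norm p y.
Proof. apply rpow_ge0. Qed.

Lemma K_coord p w B L M y n : Hyps p w B L M -> in_Y p y ->
  Cmod (Kop w L y n) <= (B + 1) * M * Y_norm p y.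
Proof.
  intros H Hy. pose proof (H_p _ _ _ _ _ H) as Hp. pose proof (B_ge0 _ _ _ _ _ H) as HB.
  pose proof (H_M0 _ _ _ _ _ H) as HM.
  destruct (Top_Y p y) as [HTy _]; auto; try lra.
  eapply Rle_trans; [apply (K_pt p w B L M y n H)|].
  pose proof (coord_le p (L y) n ltac:(lra) (H_lp _ _ _ _ _ H y Hy)).
  pose proof (coord_le p (L (Top y)) n ltac:(lra) (H_lp _ _ _ _ _ H _ HTy)).
  pose proof (H_M _ _ _ _ _ H y Hy). pose proof (H_M _ _ _ _ _ H _ HTy).
  pose proof (Ynorm_Top p y ltac:(lra) Hy). pose proof (Ynorm_ge0 p y).
  pose proof (Ynorm_ge0 p (Top y)). pose proof (Cmod_ge0 (L y n)).
  assert (M * Y_norm p (Top y) <= M * Y_norm p y) by (apply Rmult_le_compat_l; auto).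
  nra.
Qed.

Lemma K_ebv p w B L M k0 i0 n : Hyps p w B L M -> (i0 <= k0)%nat ->
  Cmod (Kop w L (ebv k0 i0) n) =
  Cmod (Csub (w n) (RtoC (INR (S i0) / INR (S k0)))) * Cmod (L (ebv k0 i0) n).
Proof.
  intros H Hi. pose proof (H_p _ _ _ _ _ H) as Hp.
  destruct (ebv_Y p k0 i0) as [He _]; auto; try lra.
  unfold Kop, Dop. rewrite Top_ebv. rewrite (H_lin _ _ _ _ _ H) by auto.
  rewrite <- Cmod_mul. f_equal.
  destruct (w n), (L (ebv k0 i0) n). unfold Csub, Cmul, Cadd, RtoC; simpl; f_equal; ring.
Qed.

Lemma nat_above x : exists N : nat, x < INR N.
Proof.
  destruct (archimed x) as [H1 _].
  destruct (Z_lt_le_dec 0 (up x)) as [Hz|Hz].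
  - exists (Z.to_nat (up x)). rewrite INR_IZR_INZ. rewrite Z2Nat.id by lia. lra.
  - exists 0%nat. simpl. apply IZR_le in Hz. lra.
Qed.

Lemma big_rpow s X : 0 < s -> exists N : nat, (1 <= N)%nat /\ X < rpow (INR N) s.
Proof.
  intros Hs. set (Y := Rabs X + 1).
  assert (HY : 0 < Y) by (unfold Y; pose proof (Rabs_pos X); lra).
  destruct (nat_above (rpow Y (1/s) + 1)) as [N HN].
  pose proof (rpow_ge0 Y (1/s)).
  assert (1 <= N)%nat.
  { destruct N; [simpl in HN; lra|lia]. }
  exists N. split; auto.
  apply Rlt_le_trans with Y. { unfold Y; pose proof (Rle_abs X); lra. }
  rewrite <- (rpow_inv2 Y s) by lra. apply rpow_le; lra.
Qed.

Lemma rpow_split N q : 0 < N -> N = rpow N q * rpow N (1 - q).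
Proof.
  intros HN. rewrite !rpow_pos by auto. rewrite <- Rpower_plus.
  replace (q + (1 - q)) with 1 by ring. rewrite Rpower_1; auto.
Qed.

Lemma sublin q C d : 0 < q < 1 -> 0 < d ->
  exists N : nat, (1 <= N)%nat /\ C * rpow (INR N) q < d * INR N.
Proof.
  intros Hq Hd. destruct (big_rpow (1 - q) (Rabs C / d)) as [N [HN1 HN2]]; [lra|].
  exists N; split; auto.
  assert (HNp : 0 < INR N) by (apply lt_0_INR; lia).
  pose proof (rpow_gt0 (INR N) q HNp).
  rewrite (rpow_split (INR N) q HNp) at 2.
  apply Rle_lt_trans with (Rabs C * rpow (INR N) q).
  { apply Rmult_le_compat_r; [lra|apply Rle_abs]. }
  assert (Rabs C < d * rpow (INR N) (1 - q)).
  { replace (Rabs C) with (d * (Rabs C / d)) by (field; lra). apply Rmult_lt_compat_l; lra. }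
  nra.
Qed.

Lemma incr_mono f : (forall t, (f t < f (S t))%nat) -> forall a b, (a < b)%nat -> (f a < f b)%nat.
Proof.
  intros H a b Hab. induction Hab. apply H. specialize (H m). lia.
Qed.

Lemma lp_sub p x y : 0 < p -> in_lp p x -> in_lp p y -> in_lp p (fun n => Csub (x n) (y n)).
Proof.
  intros Hp Hx Hy. apply summable_ex.
  apply (exs_le _ (fun n => rpow 2 p * (rpow (Cmod (x n)) p + rpow (Cmod (y n)) p))).
  - intros n. split; [apply rpow_ge0|]. eapply Rle_trans.
    + apply rpow_le; [lra|]. split; [apply Cmod_ge0|apply Cmod_sub_le].
    + apply rpow_add_le; auto; apply Cmod_ge0.
  - apply exs_scal, exs_plus; apply in_lp_ex; auto.
Qed.

Definition Zv : nat -> nat -> Cx := fun _ _ => (0,0).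

Lemma block_norm_zero k u : (forall i, u i = (0,0)) -> block_norm k u = 0.
Proof.
  intros H. unfold block_norm. rewrite (sum_f_R0_ext _ (fun _ => 0)).
  - rewrite sum_cte, Rmult_0_l. apply sqrt_0.
  - intros i _. rewrite H, Cmod_0. ring.
Qed.

Lemma Zv_Y p : in_Y p Zv /\ Ysum p Zv = 0.
Proof.
  assert (Hd : forall k, rpow (block_norm k (Zv k)) p = if Nat.eqb k 0 then 0 else 0).
  { intros k. rewrite block_norm_zero by auto. rewrite rpow_0. destruct (Nat.eqb k 0); auto. }
  destruct (Series_delta _ 0 0 Hd) as [H1 H2].
  split; [split; [intros; reflexivity|apply summable_ex; auto]|exact H2].
Qed.

Lemma L_Zv p w B L M n : Hyps p w B L M -> L Zv n = (0,0).
Proof.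
  intros H. destruct (Zv_Y p) as [HZ _].
  assert (E : Zv = Y_lin (0,0) Zv (0,0) Zv).
  { apply functional_extensionality; intros k; apply functional_extensionality; intros i.
    unfold Zv, Y_lin, Cadd, Cmul; simpl; f_equal; ring. }
  rewrite E at 1. rewrite (H_lin _ _ _ _ _ H) by auto.
  unfold Cadd, Cmul; simpl; f_equal; ring.
Qed.

Lemma K_Zv p w B L M n : Hyps p w B L M -> Kop w L Zv n = (0,0).
Proof.
  intros H. unfold Kop, Dop.
  assert (E : Top Zv = Zv).
  { apply functional_extensionality; intros k; apply functional_extensionality; intros i.
    unfold Zv, Top, Cmul; simpl; f_equal; ring. }
  rewrite E, (L_Zv p w B L M n H). unfold Csub, Cmul; simpl; f_equal; ring.
Qed.

Lemma Top_add y z : Top (Y_lin (1,0) y (1,0) z) = Y_lin (1,0) (Top y) (1,0) (Top z).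
Proof.
  apply functional_extensionality; intros k; apply functional_extensionality; intros i.
  unfold Top, Y_lin, Cadd, Cmul, RtoC; simpl; f_equal; ring.
Qed.

Lemma K_add p w B L M y z n : Hyps p w B L M -> in_Y p y -> in_Y p z ->
  Kop w L (Y_lin (1,0) y (1,0) z) n = Cadd (Kop w L y n) (Kop w L z n).
Proof.
  intros H Hy Hz. pose proof (H_p _ _ _ _ _ H).
  destruct (Top_Y p y) as [Hy' _]; auto; try lra.
  destruct (Top_Y p z) as [Hz' _]; auto; try lra.
  unfold Kop at 1, Dop. rewrite Top_add.
  rewrite !(H_lin _ _ _ _ _ H) by auto. unfold Kop, Dop.
  destruct (w n), (L y n), (L z n), (L (Top y) n), (L (Top z) n).
  unfold Cadd, Csub, Cmul; simpl; f_equal; ring.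
Qed.

Fixpoint Ssum (G Hh : nat -> nat) (N : nat) : nat -> nat -> Cx :=
  match N with
  | O => Zv
  | S N' => Y_lin (1,0) (Ssum G Hh N') (1,0) (ebv (G N') (Hh N'))
  end.

Fixpoint CS (F : nat -> Cx) (N : nat) : Cx :=
  match N with O => (0,0) | S N' => Cadd (CS F N') (F N') end.

Lemma Ylin11 y z k i : Y_lin (1,0) y (1,0) z k i = Cadd (y k i) (z k i).
Proof. unfold Y_lin, Cadd, Cmul; simpl; f_equal; ring. Qed.

Lemma Ssum_zero G Hh : (forall t, (G t < G (S t))%nat) ->
  forall N k i, (G N <= k)%nat -> Ssum G Hh N k i = (0,0).
Proof.
  intros HG N. induction N as [|N IH]; intros k i Hk; simpl; [reflexivity|].
  rewrite Ylin11. rewrite IH by (pose proof (HG N); lia).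
  unfold ebv. destruct (Nat.eqb_spec k (G N)); [pose proof (HG N); lia|].
  unfold Cadd; simpl; f_equal; ring.
Qed.

Lemma Cadd_0l v : Cadd (0,0) v = v.
Proof. destruct v; unfold Cadd; simpl; f_equal; ring. Qed.
Lemma Cadd_0r v : Cadd v (0,0) = v.
Proof. destruct v; unfold Cadd; simpl; f_equal; ring. Qed.

Lemma Ssum_Y p G Hh : 0 < p -> (forall t, (G t < G (S t))%nat) -> (forall t, (Hh t <= G t)%nat) ->
  forall N, in_Y p (Ssum G Hh N) /\ Ysum p (Ssum G Hh N) = INR N.
Proof.
  intros Hp HG HH N. induction N as [|N [[IHz IHs] IHv]].
  - simpl. apply Zv_Y.
  - assert (Hpt : forall k, rpow (block_norm k (Ssum G Hh (S N) k)) p =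
        rpow (block_norm k (Ssum G Hh N k)) p + (if Nat.eqb k (G N) then 1 else 0)).
    { intros k. destruct (Nat.eqb_spec k (G N)) as [Ek|Ek].
      - subst k. rewrite (block_norm_zero _ (Ssum G Hh N (G N)))
          by (intros; apply Ssum_zero; auto).
        replace (Ssum G Hh (S N) (G N)) with (ebv (G N) (Hh N) (G N)).
        + rewrite block_norm_ebv by auto. rewrite Nat.eqb_refl, rpow_one, rpow_0. ring.
        + apply functional_extensionality; intros i. simpl. rewrite Ylin11.
          rewrite Ssum_zero by auto. rewrite Cadd_0l. auto.
      - replace (Ssum G Hh (S N) k) with (Ssum G Hh N k). { ring. }
        apply functional_extensionality; intros i. simpl. rewrite Ylin11.
        unfold ebv at 1. destruct (Nat.eqb_spec k (G N)); [lia|]. rewrite Cadd_0r; auto. }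
    destruct (Series_delta (fun k => if Nat.eqb k (G N) then 1 else 0) (G N) 1 (fun k => eq_refl))
      as [Hd1 Hd2].
    assert (Hex : ex_series (fun k => rpow (block_norm k (Ssum G Hh N k)) p)).
    { apply summable_ex; auto. }
    assert (Efun : (fun k => rpow (block_norm k (Ssum G Hh (S N) k)) p) =
       (fun k => rpow (block_norm k (Ssum G Hh N k)) p + (if Nat.eqb k (G N) then 1 else 0))).
    { apply functional_extensionality; exact Hpt. }
    split; [split|].
    + intros k i Hki. simpl. rewrite Ylin11. rewrite IHz by auto.
      unfold ebv. destruct (Nat.eqb_spec k (G N)); destruct (Nat.eqb_spec i (Hh N));
      try (pose proof (HH N); lia); apply Cadd_0l.
    + apply summable_ex. rewrite Efun. apply exs_plus; auto.
    + unfold Ysum. rewrite Efun. rewrite Series_plus by auto. unfold Ysum in IHv.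
      rewrite IHv, Hd2. rewrite S_INR. ring.
Qed.

Lemma K_Ssum p w B L M G Hh n : Hyps p w B L M ->
  (forall t, (G t < G (S t))%nat) -> (forall t, (Hh t <= G t)%nat) ->
  forall N, Kop w L (Ssum G Hh N) n = CS (fun t => Kop w L (ebv (G t) (Hh t)) n) N.
Proof.
  intros H HG HH N. pose proof (H_p _ _ _ _ _ H).
  induction N as [|N IH]; simpl.
  - apply (K_Zv p w B L M n H).
  - rewrite (K_add p w B L M); auto.
    + rewrite IH. auto.
    + apply (Ssum_Y p G Hh); auto; lra.
    + apply (ebv_Y p); auto; lra.
Qed.

Lemma CS_lower F z e N : (forall t, (t < N)%nat -> Cmod (Csub (F t) z) <= e) ->
  INR N * (Cmod z - e) <= Cmod (CS F N).
Proof.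
  intros H.
  assert (HD : Cmod (Csub (CS F N) (Cmul (RtoC (INR N)) z)) <= INR N * e).
  { induction N as [|N IH].
    - simpl. replace (Csub (0,0) (Cmul (RtoC 0) z)) with ((0,0) : Cx).
      + rewrite Cmod_0. lra.
      + destruct z; unfold Csub, Cmul, RtoC; simpl; f_equal; ring.
    - replace (Csub (CS F (S N)) (Cmul (RtoC (INR (S N))) z)) with
        (Cadd (Csub (CS F N) (Cmul (RtoC (INR N)) z)) (Csub (F N) z)).
      + eapply Rle_trans; [apply Cmod_add_le|]. rewrite S_INR.
        pose proof (IH (fun t Ht => H t ltac:(lia))). pose proof (H N ltac:(lia)). lra.
      + change (CS F (S N)) with (Cadd (CS F N) (F N)). rewrite S_INR. destruct (CS F N), (F N), z.
        unfold Csub, Cadd, Cmul, RtoC; simpl; f_equal; ring. }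
  assert (E : Cmul (RtoC (INR N)) z = Csub (CS F N) (Csub (CS F N) (Cmul (RtoC (INR N)) z))).
  { destruct (CS F N), z. unfold Csub, Cmul, RtoC; simpl; f_equal; ring. }
  pose proof (Cmod_sub_le (CS F N) (Csub (CS F N) (Cmul (RtoC (INR N)) z))) as Hs.
  rewrite <- E in Hs. rewrite Cmod_mul, Cmod_RtoC, Rabs_pos_eq in Hs by apply pos_INR.
  lra.
Qed.

Lemma Csub_0r v : Csub v (0,0) = v.
Proof. destruct v; unfold Csub; simpl; f_equal; ring. Qed.

Lemma Pl_eq p x : 0 < p -> in_lp p x -> Pl p x = rpow (lp_norm p x) p.
Proof. intros. rewrite lp_norm_Pl by auto. rewrite rpow_inv2; auto. apply Pl_ge0; auto. Qed.

Lemma lp_norm_ge0 p x : 0 <= lp_norm p x.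
Proof. apply rpow_ge0. Qed.

Lemma CL p w B L M G Hh : Hyps p w B L M -> compact_Y_lp p (Kop w L) ->
  (forall t, (G t < G (S t))%nat) -> (forall t, (Hh t <= G t)%nat) ->
  forall eta, 0 < eta -> exists t, Pl p (Kop w L (ebv (G t) (Hh t))) < eta.
Proof.
  intros H Hc HG HH eta Heta.
  pose proof (H_p _ _ _ _ _ H) as Hp. pose proof (B_ge0 _ _ _ _ _ H) as HB.
  pose proof (H_M0 _ _ _ _ _ H) as HM.
  destruct (Hc (fun t => ebv (G t) (Hh t))) as [phi [z [Hphi [Hz Hcv]]]].
  { intros m. destruct (ebv_Y p (G m) (Hh m)) as [H1 [_ H3]]; [lra|auto|]. split; [auto|lra]. }
  assert (Hz0 : forall n, z n = (0,0)).
  { intros n0. destruct (Classical_Prop.classic (z n0 = (0,0))) as [E|Hne]; auto. exfalso.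
    set (zeta := Cmod (z n0)).
    assert (Hzeta : 0 < zeta).
    { pose proof (Cmod_ge0 (z n0)). destruct H0 as [H0|H0]; auto.
      exfalso; apply Hne; apply Cmod_eq0; auto. }
    destruct (Hcv (zeta/2)) as [m1 Hm1]; [lra|].
    set (G' := fun t => G (phi (m1 + t)%nat)).
    set (H' := fun t => Hh (phi (m1 + t)%nat)).
    assert (HG' : forall t, (G' t < G' (S t))%nat).
    { intros t. unfold G'. apply incr_mono; auto. replace (m1 + S t)%nat with (S (m1 + t)) by lia.
      apply Hphi. }
    assert (HH' : forall t, (H' t <= G' t)%nat) by (intros; unfold H', G'; auto).
    set (F := fun t => Kop w L (ebv (G' t) (H' t)) n0).
    assert (HF : forall t, Cmod (Csub (F t) (z n0)) <= zeta/2).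
    { intros t. specialize (Hm1 (m1 + t)%nat ltac:(lia)). unfold R_dist in Hm1.
      rewrite Rminus_0_r in Hm1.
      pose proof (coord_le p (fun n => Csub (Kop w L (ebv (G (phi (m1+t)%nat)) (Hh (phi (m1+t)%nat))) n) (z n)) n0 ltac:(lra)) as Hco.
      assert (Hin : in_lp p (fun n => Csub (Kop w L (ebv (G (phi (m1+t)%nat)) (Hh (phi (m1+t)%nat))) n) (z n))).
      { apply lp_sub; auto; try lra. apply (K_lp p w B L M); auto. apply (ebv_Y p); auto; lra. }
      specialize (Hco Hin). simpl in Hco. unfold F, G', H'.
      rewrite Rabs_pos_eq in Hm1 by apply lp_norm_ge0. lra. }
    destruct (sublin (1/p) ((B+1)*M) (zeta/2)) as [N [HN1 HN2]].
    { split. apply Rdiv_lt_0_compat; lra. apply Rmult_lt_reg_r with p; [lra|].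
      field_simplify; lra. }
    { lra. }
    pose proof (CS_lower F (z n0) (zeta/2) N (fun t _ => HF t)) as Hlow.
    fold zeta in Hlow.
    destruct (Ssum_Y p G' H' ltac:(lra) HG' HH' N) as [HSY HSs].
    pose proof (K_coord p w B L M (Ssum G' H' N) n0 H HSY) as Hup.
    rewrite (K_Ssum p w B L M G' H' n0 H HG' HH' N) in Hup.
    rewrite Y_norm_Ysum, HSs in Hup by auto.
    fold F in Hup. lra. }
  destruct (Hcv (rpow eta (1/p))) as [m1 Hm1].
  { apply rpow_gt0; auto. }
  exists (phi m1). specialize (Hm1 m1 (le_n _)). unfold R_dist in Hm1.
  rewrite Rminus_0_r, Rabs_pos_eq in Hm1 by apply lp_norm_ge0.
  assert (E : (fun n => Csub (Kop w L (ebv (G (phi m1)) (Hh (phi m1))) n) (z n)) =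
              Kop w L (ebv (G (phi m1)) (Hh (phi m1)))).
  { apply functional_extensionality; intros n. rewrite Hz0. apply Csub_0r. }
  rewrite E in Hm1.
  rewrite Pl_eq by (try lra; apply (K_lp p w B L M); auto; apply (ebv_Y p); auto; lra).
  rewrite <- (rpow_inv2 eta p) by lra. apply rpow_lt; [lra|]. split; auto. apply lp_norm_ge0.
Qed.

Fixpoint Xs (Rb m : nat) (s : R) (N : nat) : nat -> nat -> Cx :=
  match N with
  | O => Zv
  | S N' => Y_lin (1,0) (Xs Rb m s N') (RtoC s) (ebv Rb (N' * m))
  end.

Lemma Ylin1s y s z k i : Y_lin (1,0) y (RtoC s) z k i = Cadd (y k i) (Cmul (RtoC s) (z k i)).
Proof. unfold Y_lin, Cadd, Cmul, RtoC; simpl; f_equal; ring. Qed.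

Lemma Cmul_0r a : Cmul a (0,0) = (0,0).
Proof. destruct a; unfold Cmul; simpl; f_equal; ring. Qed.

Lemma Xs_zero Rb m s : (1 <= m)%nat -> forall N k i, (k <> Rb \/ (N * m <= i)%nat) ->
  Xs Rb m s N k i = (0,0).
Proof.
  intros Hm N. induction N as [|N IH]; intros k i Hki; simpl; [reflexivity|].
  rewrite Ylin1s. rewrite IH by (destruct Hki; [left; auto|right; nia]).
  unfold ebv. destruct (Nat.eqb_spec k Rb); destruct (Nat.eqb_spec i (N*m));
    try (destruct Hki; [congruence|nia]); rewrite Cmul_0r; apply Cadd_0l.
Qed.

Lemma Xs_sq Rb m s : (1 <= m)%nat -> forall N, (N * m <= S Rb)%nat ->
  sum_f_R0 (fun i => Cmod (Xs Rb m s N Rb i) ^ 2) Rb = s^2 * INR N.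
Proof.
  intros Hm N. induction N as [|N IH]; intros HN.
  - simpl. rewrite (sum_f_R0_ext _ (fun _ => 0)). rewrite sum_cte; ring.
    intros; unfold Zv; rewrite Cmod_0; ring.
  - rewrite (sum_f_R0_ext _ (fun i => Cmod (Xs Rb m s N Rb i) ^ 2 +
          (if Nat.eqb i (N*m) then s^2 else 0))).
    + rewrite sum_plus, IH by nia. rewrite sum_ind.
      destruct (Nat.leb_spec (N*m) Rb); [|nia]. rewrite S_INR; ring.
    + intros i _. change (Xs Rb m s (S N)) with (Y_lin (1,0) (Xs Rb m s N) (RtoC s) (ebv Rb (N * m))).
      rewrite Ylin1s. unfold ebv. rewrite Nat.eqb_refl.
      destruct (Nat.eqb_spec i (N*m)).
      * rewrite Xs_zero by (auto; right; lia). rewrite Cadd_0l.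
        rewrite Cmod_mul, Cmod_RtoC, Cmod_1. rewrite Cmod_0. pose proof (pow2_abs s). nra.
      * rewrite Cmul_0r, Cadd_0r. ring.
Qed.

Lemma Xs_Y p Rb m s N : 0 < p -> (1 <= m)%nat -> (N * m = S Rb)%nat ->
  in_Y p (Xs Rb m s N) /\ Y_norm p (Xs Rb m s N) = rpow (sqrt (s^2 * INR N)) 1.
Proof.
  intros Hp Hm HN.
  assert (Hd : forall k, rpow (block_norm k (Xs Rb m s N k)) p =
     if Nat.eqb k Rb then rpow (sqrt (s^2 * INR N)) p else 0).
  { intros k. destruct (Nat.eqb_spec k Rb).
    - subst. unfold block_norm. rewrite Xs_sq by lia. auto.
    - rewrite block_norm_zero; [apply rpow_0|]. intros; apply Xs_zero; auto. }
  destruct (Series_delta _ Rb _ Hd) as [H1 H2].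
  assert (HY : in_Y p (Xs Rb m s N)).
  { split.
    - intros k i Hki. apply Xs_zero; auto. destruct (Nat.eq_dec k Rb); [right; lia|left; auto].
    - apply summable_ex; auto. }
  split; auto. rewrite Y_norm_Ysum by auto. unfold Ysum. rewrite H2.
  rewrite rpow_rpow by apply sqrt_pos. f_equal. field. lra.
Qed.

Lemma Xs_inY p Rb m s N : (1 <= m)%nat -> (N * m <= S Rb)%nat -> in_Y p (Xs Rb m s N).
Proof.
  intros Hm HN.
  assert (Hd : forall k, rpow (block_norm k (Xs Rb m s N k)) p =
     if Nat.eqb k Rb then rpow (sqrt (s^2 * INR N)) p else 0).
  { intros k. destruct (Nat.eqb_spec k Rb).
    - subst. unfold block_norm. rewrite Xs_sq by lia. auto.
    - rewrite block_norm_zero; [apply rpow_0|]. intros; apply Xs_zero; auto. }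
  destruct (Series_delta _ Rb _ Hd) as [H1 H2].
  split.
  - intros k i Hki. apply Xs_zero; auto. destruct (Nat.eq_dec k Rb); [right; lia|left; auto].
  - apply summable_ex; auto.
Qed.

Lemma L_Xs p w B L M Rb m s n : Hyps p w B L M -> (1 <= m)%nat ->
  forall N, (N * m <= S Rb)%nat ->
  L (Xs Rb m s N) n = CS (fun a => Cmul (RtoC s) (L (ebv Rb (a * m)) n)) N.
Proof.
  intros H Hm N. pose proof (H_p _ _ _ _ _ H).
  induction N as [|N IH]; intros HN.
  - apply (L_Zv p w B L M n H).
  - simpl. rewrite (H_lin _ _ _ _ _ H).
    + rewrite IH by nia. destruct (CS _ N), (L (ebv Rb (N*m)) n).
      unfold Cadd, Cmul, RtoC; simpl; f_equal; ring.
    + apply Xs_inY; auto; nia.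
    + apply (ebv_Y p); [lra|nia].
Qed.

Lemma CS_scal s G N : CS (fun a => Cmul (RtoC s) (G a)) N = Cmul (RtoC s) (CS G N).
Proof.
  induction N as [|N IH]; simpl.
  - unfold Cmul, RtoC; simpl; f_equal; ring.
  - rewrite IH. destruct (CS G N), (G N). unfold Cadd, Cmul, RtoC; simpl; f_equal; ring.
Qed.

Fixpoint RS (f : nat -> R) (N : nat) : R :=
  match N with O => 0 | S N' => RS f N' + f N' end.

Lemma RS_ext f g N : (forall a, (a < N)%nat -> f a = g a) -> RS f N = RS g N.
Proof. intros H; induction N; simpl; auto. rewrite IHN by (intros; apply H; lia). rewrite H by lia; auto. Qed.
Lemma RS_le f g N : (forall a, (a < N)%nat -> f a <= g a) -> RS f N <= RS g N.
Proof. intros H; induction N; simpl; [lra|]. pose proof (H N ltac:(lia)). pose proof (IHN (fun a Ha => H a ltac:(lia))). lra. Qed.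
Lemma RS_const c N : RS (fun _ => c) N = INR N * c.
Proof. induction N; simpl RS; [simpl; ring|]. rewrite IHN, S_INR; ring. Qed.
Lemma RS_ge0 f N : (forall a, (a < N)%nat -> 0 <= f a) -> 0 <= RS f N.
Proof.
  intros H. pose proof (RS_le (fun _ => 0) f N H). rewrite RS_const in H0. lra.
Qed.
Lemma RS_plus f g N : RS (fun a => f a + g a) N = RS f N + RS g N.
Proof. induction N; simpl; [ring|]. rewrite IHN; ring. Qed.
Lemma RS_scal c f N : RS (fun a => c * f a) N = c * RS f N.
Proof. induction N; simpl; [ring|]. rewrite IHN; ring. Qed.

Lemma Series_RS (f : nat -> nat -> R) N : (forall a, ex_series (f a)) ->
  ex_series (fun n => RS (fun a => f a n) N) /\
  Series (fun n => RS (fun a => f a n) N) = RS (fun a => Series (f a)) N.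
Proof.
  intros H. induction N as [|N [IH1 IH2]]; simpl.
  - split. apply (Series_fin _ 0); auto. apply Series_zero.
  - split. apply exs_plus; auto. rewrite Series_plus; auto. rewrite IH2; auto.
Qed.

Lemma rpow_RS p c N : 0 < p -> (forall a, 0 <= c a) ->
  rpow (RS c N) p <= (rpow 2 p) ^ N * RS (fun a => rpow (c a) p) N.
Proof.
  intros Hp Hc. induction N as [|N IH]; simpl.
  - rewrite rpow_0; lra.
  - assert (H0 : 0 <= RS c N) by (apply RS_ge0; auto).
    pose proof (rpow2_ge1 p ltac:(lra)) as H2.
    assert (H3 : 1 <= rpow 2 p ^ N) by (apply pow_R1_Rle; auto).
    assert (H4 : 0 <= RS (fun a => rpow (c a) p) N) by (apply RS_ge0; intros; apply rpow_ge0).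
    pose proof (rpow_ge0 (c N) p).
    eapply Rle_trans; [apply rpow_add_le; auto|].
    assert (rpow (RS c N) p + rpow (c N) p <= rpow 2 p ^ N * (RS (fun a => rpow (c a) p) N + rpow (c N) p)) by nra.
    replace (rpow 2 p * rpow 2 p ^ N * (RS (fun a => rpow (c a) p) N + rpow (c N) p))
      with (rpow 2 p * (rpow 2 p ^ N * (RS (fun a => rpow (c a) p) N + rpow (c N) p))) by ring.
    apply Rmult_le_compat_l; lra.
Qed.

Lemma CS_norm G N : Cmod (CS G N) <= RS (fun a => Cmod (G a)) N.
Proof.
  induction N; simpl. rewrite Cmod_0; lra.
  eapply Rle_trans; [apply Cmod_add_le|]. lra.
Qed.

Lemma CS_zero G N : (forall a, (a < N)%nat -> G a = (0,0)) -> CS G N = (0,0).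
Proof. intros H; induction N; simpl; auto. rewrite IHN by (intros; apply H; lia). rewrite H by lia. apply Cadd_0l. Qed.
Lemma RS_zero f N : (forall a, (a < N)%nat -> f a = 0) -> RS f N = 0.
Proof. intros H; induction N; simpl; auto. rewrite IHN by (intros; apply H; lia). rewrite H by lia. ring. Qed.

Lemma disj_pow p (g : nat -> bool) (V : nat -> Cx) N :
  (forall a b, (a < N)%nat -> (b < N)%nat -> g a = true -> g b = true -> a = b) ->
  rpow (Cmod (CS (fun a => if g a then V a else (0,0)) N)) p =
  RS (fun a => if g a then rpow (Cmod (V a)) p else 0) N.
Proof.
  intros H. induction N as [|N IH]; simpl.
  - rewrite Cmod_0; apply rpow_0.
  - destruct (g N) eqn:Eg.
    + rewrite CS_zero, RS_zero.
      * rewrite Cadd_0l; ring.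
      * intros a Ha. destruct (g a) eqn:Ea; auto. specialize (H a N ltac:(lia) ltac:(lia) Ea Eg). lia.
      * intros a Ha. destruct (g a) eqn:Ea; auto. specialize (H a N ltac:(lia) ltac:(lia) Ea Eg). lia.
    + rewrite Cadd_0r, IH by (intros; apply H; auto; lia). ring.
Qed.

Lemma CS_split F G N : CS (fun a => Cadd (F a) (G a)) N = Cadd (CS F N) (CS G N).
Proof.
  induction N; simpl. unfold Cadd; simpl; f_equal; ring.
  rewrite IHN. destruct (CS F N), (CS G N), (F N), (G N). unfold Cadd; simpl; f_equal; ring.
Qed.

Lemma pointwise p (g : nat -> bool) (V : nat -> Cx) (Kc : nat -> R) d N :
  0 < p -> 0 < d ->
  (forall a, (a < N)%nat -> g a = false -> Cmod (V a) <= Kc a / d) ->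
  (forall a, 0 <= Kc a) ->
  (forall a b, (a < N)%nat -> (b < N)%nat -> g a = true -> g b = true -> a = b) ->
  rpow (Cmod (CS V N)) p <=
    rpow 2 p * (RS (fun a => if g a then rpow (Cmod (V a)) p else 0) N +
                rpow (/d) p * rpow 2 p ^ N * RS (fun a => rpow (Kc a) p) N) /\
  RS (fun a => if g a then rpow (Cmod (V a)) p else 0) N <=
    rpow 2 p * (rpow (Cmod (CS V N)) p +
                rpow (/d) p * rpow 2 p ^ N * RS (fun a => rpow (Kc a) p) N).
Proof.
  intros Hp Hd Hg HK Hdisj.
  set (al := CS (fun a => if g a then V a else (0,0)) N).
  set (ga := CS (fun a => if g a then (0,0) else V a) N).
  set (be := RS (fun a => if g a then 0 else Cmod (V a)) N).
  assert (Eu : CS V N = Cadd al ga).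
  { unfold al, ga. rewrite <- CS_split. f_equal. apply functional_extensionality; intros a.
    destruct (g a); [rewrite Cadd_0r|rewrite Cadd_0l]; auto. }
  assert (Hga : Cmod ga <= be).
  { unfold ga, be. eapply Rle_trans; [apply CS_norm|]. apply RS_le. intros a _.
    destruct (g a); [rewrite Cmod_0|]; lra. }
  assert (Hbe0 : 0 <= be) by (eapply Rle_trans; [apply Cmod_ge0|apply Hga]).
  assert (Hbe : be <= / d * RS Kc N).
  { unfold be. rewrite <- RS_scal. apply RS_le. intros a Ha.
    destruct (g a) eqn:E. rewrite Rmult_comm. apply Rmult_le_pos; auto. left; apply Rinv_0_lt_compat; auto.
    rewrite Rmult_comm. apply Hg; auto. }
  assert (Hpb : rpow be p <= rpow (/d) p * rpow 2 p ^ N * RS (fun a => rpow (Kc a) p) N).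
  { eapply Rle_trans. apply rpow_le; [lra|split; [auto|apply Hbe]].
    rewrite rpow_mult. 2: left; apply Rinv_0_lt_compat; auto. 2: apply RS_ge0; auto.
    rewrite Rmult_assoc. apply Rmult_le_compat_l; [apply rpow_ge0|]. apply rpow_RS; auto. }
  assert (Hal : rpow (Cmod al) p = RS (fun a => if g a then rpow (Cmod (V a)) p else 0) N).
  { apply disj_pow; auto. }
  assert (H1 : Cmod (CS V N) <= Cmod al + be).
  { rewrite Eu. eapply Rle_trans; [apply Cmod_add_le|]. lra. }
  assert (H2 : Cmod al <= Cmod (CS V N) + be).
  { replace al with (Csub (CS V N) ga).
    - eapply Rle_trans; [apply Cmod_sub_le|]. lra.
    - rewrite Eu. destruct al, ga. unfold Csub, Cadd; simpl; f_equal; ring. }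
  pose proof (rpow2_ge1 p ltac:(lra)).
  split.
  - rewrite <- Hal. eapply Rle_trans. apply rpow_le; [lra|split; [apply Cmod_ge0|apply H1]].
    eapply Rle_trans. apply rpow_add_le; auto; apply Cmod_ge0.
    apply Rmult_le_compat_l; lra.
  - rewrite <- Hal. eapply Rle_trans. apply rpow_le; [lra|split; [apply Cmod_ge0|apply H2]].
    eapply Rle_trans. apply rpow_add_le; auto; apply Cmod_ge0.
    apply Rmult_le_compat_l; lra.
Qed.

Lemma nat_sep a b : a <> b -> 1 <= Rabs (INR a - INR b).
Proof.
  intros H. destruct (Nat.lt_gt_cases a b) as [Hl0 _]. destruct (Hl0 H) as [Hl|Hl].
  - apply le_INR in Hl. rewrite S_INR in Hl. rewrite Rabs_left1 by lra. lra.
  - apply le_INR in Hl. rewrite S_INR in Hl. rewrite Rabs_pos_eq by lra. lra.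
Qed.

Lemma lam_sep k m a b : (1 <= k)%nat -> (1 <= m)%nat -> a <> b ->
  / INR k <= Rabs (INR (S (a * m)) / INR (k * m) - INR (S (b * m)) / INR (k * m)).
Proof.
  intros Hk Hm Hab.
  assert (Hk' : 0 < INR k) by (apply lt_0_INR; lia).
  assert (Hm' : 0 < INR m) by (apply lt_0_INR; lia).
  replace (INR (S (a * m)) / INR (k * m) - INR (S (b * m)) / INR (k * m))
    with ((INR a - INR b) / INR k).
  - unfold Rdiv. rewrite Rabs_mult, (Rabs_pos_eq (/ INR k)) by (left; apply Rinv_0_lt_compat; auto).
    pose proof (nat_sep a b Hab). pose proof (Rinv_0_lt_compat _ Hk'). nra.
  - rewrite !S_INR, !mult_INR. field. lra.
Qed.

Lemma Series_RS' (f : nat -> nat -> R) N : (forall a, (a < N)%nat -> ex_series (f a)) ->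
  ex_series (fun n => RS (fun a => f a n) N) /\
  Series (fun n => RS (fun a => f a n) N) = RS (fun a => Series (f a)) N.
Proof.
  intros H. induction N as [|N IH]; simpl.
  - split. apply (Series_fin _ 0); auto. apply Series_zero.
  - destruct IH as [IH1 IH2]; [intros; apply H; lia|].
    split. apply exs_plus; auto. rewrite Series_plus; auto. rewrite IH2; auto.
Qed.

Lemma Series_le2 a b : (forall n, 0 <= a n) -> (forall n, a n <= b n) -> ex_series b ->
  ex_series a /\ Series a <= Series b.
Proof.
  intros H1 H2 H3. assert (ex_series a) by (apply (exs_le a b); auto).
  split; auto. apply Series_le; auto.
Qed.

Lemma main_est p w B L M c k m eta0 :
  Hyps p w B L M -> 0 < c ->
  (forall y, in_Y p y -> Y_norm p y = 1 -> c <= lp_norm p (L y)) ->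
  (1 <= k)%nat -> (1 <= m)%nat -> 0 <= eta0 ->
  (forall a, (a < k)%nat -> Pl p (Kop w L (ebv (k*m - 1) (a*m))) <= eta0) ->
  rpow c p <= rpow (/ sqrt (INR k)) p * INR k *
      (rpow 2 p * (rpow M p + rpow (2 * INR k) p * rpow 2 p ^ k * eta0)) /\
  rpow (/ sqrt (INR k)) p * INR k *
      (/ rpow 2 p * (rpow c p - rpow (2 * INR k) p * eta0)
        - rpow (2 * INR k) p * rpow 2 p ^ k * eta0) <= rpow M p.
Proof.
  intros H Hc HcL Hk Hm Heta HK.
  pose proof (H_p _ _ _ _ _ H) as Hp. pose proof (H_M0 _ _ _ _ _ H) as HM.
  set (Rb := (k*m - 1)%nat) in *.
  assert (HRb : S Rb = (k*m)%nat) by (unfold Rb; nia).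
  assert (Hk' : 0 < INR k) by (apply lt_0_INR; lia).
  set (s := / sqrt (INR k)).
  assert (Hs : 0 < s) by (apply Rinv_0_lt_compat, sqrt_lt_R0; auto).
  assert (Hs2 : s^2 * INR k = 1).
  { unfold s. rewrite pow_inv. simpl. rewrite Rmult_1_r, sqrt_sqrt by lra. field. lra. }
  set (d := / (2 * INR k)).
  assert (Hd : 0 < d) by (apply Rinv_0_lt_compat; lra).
  assert (Hdi : / d = 2 * INR k) by (unfold d; rewrite Rinv_inv; auto).
  set (CC := rpow (2 * INR k) p * rpow 2 p ^ k).
  set (D := rpow (2 * INR k) p).
  set (x := Xs Rb m s k).
  destruct (Xs_Y p Rb m s k ltac:(lra) Hm ltac:(lia)) as [HxY Hxn].
  rewrite Hs2, sqrt_1, rpow_1 in Hxn by lra. fold x in HxY, Hxn.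
  set (v := fun a n => L (ebv Rb (a*m)) n).
  set (Ka := fun a n => Kop w L (ebv Rb (a*m)) n).
  assert (HeY : forall a, (a < k)%nat -> in_Y p (ebv Rb (a*m)) /\ Y_norm p (ebv Rb (a*m)) = 1).
  { intros a Ha. destruct (ebv_Y p Rb (a*m)) as [H1 [_ H3]]; [lra|nia|]. auto. }
  set (u := fun n => CS (fun a => v a n) k).
  assert (HLx : forall n, L x n = Cmul (RtoC s) (u n)).
  { intros n. unfold x. rewrite (L_Xs p w B L M Rb m s n H Hm k) by lia.
    rewrite CS_scal. auto. }
  set (U := fun n => rpow (Cmod (u n)) p).
  assert (HLlp : in_lp p (L x)) by (apply (H_lp _ _ _ _ _ H); auto).
  assert (HPw : forall n, rpow (Cmod (L x n)) p = rpow s p * U n).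
  { intros n. rewrite HLx, Cmod_mul, Cmod_RtoC, Rabs_pos_eq by lra.
    unfold U. apply rpow_mult; [lra|apply Cmod_ge0]. }
  assert (HPl : Pl p (L x) = rpow s p * Series U).
  { unfold Pl. rewrite <- Series_scal_l. apply Series_ext. auto. }
  assert (HexU : ex_series U).
  { pose proof (in_lp_ex p (L x) HLlp) as E.
    assert (E2 : ex_series (fun n => / rpow s p * rpow (Cmod (L x n)) p)) by (apply exs_scal; auto).
    eapply ex_series_ext; [|exact E2]. intros n. simpl. rewrite HPw. field.
    apply Rgt_not_eq, rpow_gt0; auto. }
  assert (Hlow : rpow c p <= Pl p (L x)).
  { apply Pl_ge; auto; try lra. }
  assert (Hup : Pl p (L x) <= rpow M p).
  { pose proof (H_M _ _ _ _ _ H x HxY) as E. rewrite Hxn, Rmult_1_r in E.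
    apply Pl_le; auto; lra. }
  set (lam := fun a => INR (S (a * m)) / INR (S Rb)).
  set (g := fun n a => if Rlt_dec (Rabs (fst (w n) - lam a)) d then true else false).
  assert (Hng : forall n a, (a < k)%nat -> g n a = false -> Cmod (v a n) <= Cmod (Ka a n) / d).
  { intros n a Ha Hg. unfold g in Hg. destruct (Rlt_dec _ _) as [_|Hn]; [discriminate|].
    unfold Ka. rewrite (K_ebv p w B L M Rb (a*m) n H) by nia. fold (lam a).
    assert (d <= Cmod (Csub (w n) (RtoC (lam a)))).
    { pose proof (Cmod_fst (Csub (w n) (RtoC (lam a)))). simpl in H0. lra. }
    apply Rcomplements.Rle_div_r; auto. fold (v a n).
    pose proof (Cmod_ge0 (v a n)). nra. }
  assert (Hdisj : forall n a b, (a < k)%nat -> (b < k)%nat -> g n a = true -> g n b = true -> a = b).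
  { intros n a b Ha Hb Ga Gb. unfold g in Ga, Gb.
    destruct (Rlt_dec _ _) as [Ra|_] in Ga; [|discriminate].
    destruct (Rlt_dec _ _) as [Rb'|_] in Gb; [|discriminate].
    destruct (Nat.eq_dec a b) as [|Hab]; auto. exfalso.
    pose proof (lam_sep k m a b Hk Hm Hab) as Hsep. unfold lam in Ra, Rb'.
    rewrite HRb in Ra, Rb'.
    assert (Hdk : d = / INR k / 2) by (unfold d; field; lra).
    rewrite Hdk in Ra, Rb'.
    pose proof (Rabs_triang (INR (S (a * m)) / INR (k * m) - fst (w n))
                            (fst (w n) - INR (S (b * m)) / INR (k * m))) as T.
    replace (INR (S (a * m)) / INR (k * m) - fst (w n) + (fst (w n) - INR (S (b * m)) / INR (k * m)))
      with (INR (S (a * m)) / INR (k * m) - INR (S (b * m)) / INR (k * m)) in T by ring.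
    rewrite (Rabs_minus_sym (INR (S (a*m)) / INR (k*m)) (fst (w n))) in T. lra. }
  set (A := fun n => RS (fun a => if g n a then rpow (Cmod (v a n)) p else 0) k).
  set (E := fun n => RS (fun a => rpow (Cmod (Ka a n)) p) k).
  assert (Hpt : forall n, U n <= rpow 2 p * (A n + CC * E n) /\ A n <= rpow 2 p * (U n + CC * E n)).
  { intros n. destruct (pointwise p (g n) (fun a => v a n) (fun a => Cmod (Ka a n)) d k
      ltac:(lra) Hd (fun a Ha Hg => Hng n a Ha Hg) (fun a => Cmod_ge0 _) (Hdisj n)) as [P1 P2].
    rewrite Hdi in P1, P2. fold CC in P1, P2. split; [exact P1|exact P2]. }
  assert (Hv_ex : forall a, (a < k)%nat -> ex_series (fun n => rpow (Cmod (v a n)) p)).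
  { intros a Ha. apply in_lp_ex. apply (H_lp _ _ _ _ _ H). apply HeY; auto. }
  assert (HK_ex : forall a, (a < k)%nat -> ex_series (fun n => rpow (Cmod (Ka a n)) p)).
  { intros a Ha. apply in_lp_ex. apply (K_lp p w B L M); auto. apply HeY; auto. }
  assert (HvPl : forall a, (a < k)%nat ->
     rpow c p <= Series (fun n => rpow (Cmod (v a n)) p) <= rpow M p).
  { intros a Ha. destruct (HeY a Ha) as [HY1 HY2].
    assert (Hin : in_lp p (L (ebv Rb (a*m)))) by (apply (H_lp _ _ _ _ _ H); auto).
    split.
    - apply (Pl_ge p (L (ebv Rb (a*m))) c); auto; lra.
    - pose proof (H_M _ _ _ _ _ H _ HY1) as E1. rewrite HY2, Rmult_1_r in E1.
      apply (Pl_le p (L (ebv Rb (a*m))) M); auto; lra. }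
  destruct (Series_RS' (fun a n => rpow (Cmod (Ka a n)) p) k HK_ex) as [HexE HSE].
  fold E in HexE, HSE. change (fun n => E n) with E in HexE, HSE.
  assert (HSE' : Series E <= INR k * eta0).
  { rewrite HSE, <- RS_const. apply RS_le. intros a Ha. apply HK; auto. }
  destruct (Series_RS' (fun a n => rpow (Cmod (v a n)) p) k Hv_ex) as [HexV HSV].
  destruct (Series_le2 A (fun n => RS (fun a => rpow (Cmod (v a n)) p) k)) as [HexA HSA1]; auto.
  { intros n. apply RS_ge0. intros a _. destruct (g n a); [apply rpow_ge0|lra]. }
  { intros n. apply RS_le. intros a _. destruct (g n a); [lra|apply rpow_ge0]. }
  assert (HSAup : Series A <= INR k * rpow M p).
  { eapply Rle_trans; [apply HSA1|]. rewrite HSV, <- RS_const. apply RS_le. intros a Ha. apply HvPl; auto. }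
  assert (Hg_ex : forall a, (a < k)%nat -> ex_series (fun n => if g n a then rpow (Cmod (v a n)) p else 0)).
  { intros a Ha. apply (exs_le _ (fun n => rpow (Cmod (v a n)) p)); auto.
    intros n. destruct (g n a); split; try apply rpow_ge0; lra. }
  assert (Hga : forall a, (a < k)%nat ->
     rpow c p - D * eta0 <= Series (fun n => if g n a then rpow (Cmod (v a n)) p else 0)).
  { intros a Ha.
    set (ng := fun n => if g n a then 0 else rpow (Cmod (v a n)) p).
    assert (Hng1 : forall n, 0 <= ng n <= D * rpow (Cmod (Ka a n)) p).
    { intros n. unfold ng. destruct (g n a) eqn:Eg.
      - split; [lra|]. apply Rmult_le_pos; apply rpow_ge0.
      - split; [apply rpow_ge0|]. pose proof (Hng n a Ha Eg) as E1.
        unfold D. rewrite <- rpow_mult by (try lra; apply Cmod_ge0).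
        apply rpow_le; [lra|]. split; [apply Cmod_ge0|].
        unfold Rdiv in E1. rewrite Hdi in E1. lra. }
    destruct (Series_le2 ng (fun n => D * rpow (Cmod (Ka a n)) p)) as [Hexng Hng2].
    { intros; apply Hng1. } { intros; apply Hng1. } { apply exs_scal; auto. }
    rewrite Series_scal_l in Hng2.
    assert (Hsplit : Series (fun n => rpow (Cmod (v a n)) p) =
        Series (fun n => if g n a then rpow (Cmod (v a n)) p else 0) + Series ng).
    { rewrite <- Series_plus; auto. apply Series_ext. intros n. unfold ng.
      destruct (g n a); ring. }
    pose proof (HvPl a Ha) as [E1 _]. pose proof (HK a Ha) as E2.
    change (Pl p (Kop w L (ebv Rb (a * m)))) with (Series (fun n => rpow (Cmod (Ka a n)) p)) in E2.
    assert (0 <= D) by apply rpow_ge0.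
    assert (D * Series (fun n => rpow (Cmod (Ka a n)) p) <= D * eta0) by (apply Rmult_le_compat_l; auto).
    lra. }
  destruct (Series_RS' (fun a n => if g n a then rpow (Cmod (v a n)) p else 0) k Hg_ex) as [_ HSA].
  change (fun n => RS (fun a => if g n a then rpow (Cmod (v a n)) p else 0) k) with A in HSA.
  assert (HSAlow : INR k * (rpow c p - D * eta0) <= Series A).
  { rewrite HSA, <- RS_const. apply RS_le. intros a Ha. apply Hga; auto. }
  set (P2 := rpow 2 p). assert (HP2 : 1 <= P2) by (apply rpow2_ge1; lra).
  assert (HCC : 0 <= CC) by (unfold CC; apply Rmult_le_pos; [apply rpow_ge0|apply pow_le, rpow_ge0]).
  assert (HSE0 : 0 <= Series E).
  { apply Series_ge0; auto. intros n. apply RS_ge0. intros; apply rpow_ge0. }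
  assert (HexR : ex_series (fun n => P2 * (A n + CC * E n))).
  { apply exs_scal, exs_plus; auto. apply exs_scal; auto. }
  assert (HSR : Series (fun n => P2 * (A n + CC * E n)) = P2 * (Series A + CC * Series E)).
  { rewrite Series_scal_l, Series_plus, Series_scal_l; auto. apply exs_scal; auto. }
  assert (HexR2 : ex_series (fun n => P2 * (U n + CC * E n))).
  { apply exs_scal, exs_plus; auto. apply exs_scal; auto. }
  assert (HSR2 : Series (fun n => P2 * (U n + CC * E n)) = P2 * (Series U + CC * Series E)).
  { rewrite Series_scal_l, Series_plus, Series_scal_l; auto. apply exs_scal; auto. }
  assert (HU1 : Series U <= P2 * (Series A + CC * Series E)).
  { rewrite <- HSR. apply Series_le; auto. intros n; split; [apply rpow_ge0|apply Hpt]. }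
  assert (HU2 : Series A <= P2 * (Series U + CC * Series E)).
  { rewrite <- HSR2. apply Series_le; auto. intros n; split.
    - apply RS_ge0. intros a _. destruct (g n a); [apply rpow_ge0|lra].
    - apply Hpt. }
  assert (Hrs : 0 <= rpow s p) by apply rpow_ge0.
  fold s. fold D. fold CC. fold P2.
  split.
  - assert (Series U <= P2 * (INR k * rpow M p + CC * (INR k * eta0))).
    { eapply Rle_trans; [apply HU1|]. apply Rmult_le_compat_l; [lra|].
      assert (CC * Series E <= CC * (INR k * eta0)) by (apply Rmult_le_compat_l; auto). lra. }
    assert (rpow s p * Series U <= rpow s p * (P2 * (INR k * rpow M p + CC * (INR k * eta0))))
      by (apply Rmult_le_compat_l; auto).
    rewrite HPl in Hlow.
    replace (rpow s p * INR k * (P2 * (rpow M p + CC * eta0))) with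
      (rpow s p * (P2 * (INR k * rpow M p + CC * (INR k * eta0)))) by ring. lra.
  - assert (HSU : / P2 * (INR k * (rpow c p - D * eta0)) - CC * (INR k * eta0) <= Series U).
    { assert (Series A / P2 <= Series U + CC * Series E).
      { apply Rcomplements.Rle_div_l; lra. }
      assert (CC * Series E <= CC * (INR k * eta0)) by (apply Rmult_le_compat_l; auto).
      assert (/ P2 * (INR k * (rpow c p - D * eta0)) <= Series A / P2).
      { unfold Rdiv. rewrite Rmult_comm. apply Rmult_le_compat_r; auto.
        left; apply Rinv_0_lt_compat; lra. }
      lra. }
    assert (rpow s p * (/ P2 * (INR k * (rpow c p - D * eta0)) - CC * (INR k * eta0)) <= rpow s p * Series U)
      by (apply Rmult_le_compat_l; auto).
    rewrite HPl in Hup.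
    replace (rpow s p * INR k * (/ P2 * (rpow c p - D * eta0) - CC * eta0)) with
      (rpow s p * (/ P2 * (INR k * (rpow c p - D * eta0)) - CC * (INR k * eta0))) by ring. lra.
Qed.

Lemma sigma_eq p k : (1 <= k)%nat ->
  rpow (/ sqrt (INR k)) p * INR k = rpow (INR k) (1 - p/2).
Proof.
  intros Hk. assert (Hk' : 0 < INR k) by (apply lt_0_INR; lia).
  assert (Hsq : 0 < sqrt (INR k)) by (apply sqrt_lt_R0; auto).
  assert (E1 : rpow (/ sqrt (INR k)) p * rpow (sqrt (INR k)) p = 1).
  { rewrite <- rpow_mult by (left; auto; apply Rinv_0_lt_compat; auto).
    rewrite Rinv_l by lra. apply rpow_one. }
  assert (E2 : rpow (sqrt (INR k)) p = rpow (INR k) (p/2)).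
  { rewrite <- Rpower_sqrt by auto. rewrite <- (rpow_pos (INR k) (/2)) by auto.
    rewrite rpow_rpow by lra. f_equal. field. }
  rewrite (rpow_split (INR k) (p/2)) at 2 by auto.
  rewrite <- E2. rewrite <- Rmult_assoc, E1. ring.
Qed.

Theorem lemma5p21 (p : R) (hp1 : 1 < p) (hp2 : p <> 2)
  (w : nat -> Cx) (hw : bounded_weights w) :
  ~ exists L : (nat -> nat -> Cx) -> (nat -> Cx),
      bounded_linear_Y_lp p L /\
      (exists c : R, 0 < c /\
         forall y, in_Y p y -> Y_norm p y = 1 -> c <= lp_norm p (L y)) /\
      compact_Y_lp p
        (fun y n => Csub (Dop w (L y) n) (L (Top y) n)).
Proof.
  intros [L [[Hlp [Hlin [M HM]]] [[c [Hc HcL]] Hcomp]]].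
  destruct hw as [B HB].
  assert (HM0 : 0 <= M).
  { destruct (ebv_Y p 0 0) as [HY [_ Hn]]; [lra|lia|].
    pose proof (HcL _ HY Hn). pose proof (HM _ HY). rewrite Hn in H0. lra. }
  assert (H : Hyps p w B L M) by (constructor; auto).
  change (compact_Y_lp p (Kop w L)) in Hcomp.
  set (cp := rpow c p). assert (Hcp : 0 < cp) by (apply rpow_gt0; auto).
  set (Mp := rpow M p). assert (HMp : 0 <= Mp) by apply rpow_ge0.
  set (P2 := rpow 2 p). assert (HP2 : 1 <= P2) by (apply rpow2_ge1; lra).
  assert (Hkex : exists k, (1 <= k)%nat /\
     ((p < 2 -> 4 * P2 * Mp / cp < rpow (INR k) (1 - p/2)) /\
      (2 < p -> rpow (INR k) (1 - p/2) < cp / (2 * P2 * (Mp + cp))))).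
  { destruct (Rtotal_order p 2) as [Hlt|[Heq|Hgt]]; [|congruence|].
    - destruct (big_rpow (1 - p/2) (4 * P2 * Mp / cp)) as [k [Hk1 Hk2]]; [lra|].
      exists k. split; auto. split; auto. intros; lra.
    - destruct (big_rpow (p/2 - 1) (2 * P2 * (Mp + cp) / cp)) as [k [Hk1 Hk2]]; [lra|].
      exists k. split; auto. split; [intros; lra|]. intros _.
      assert (Hk' : 0 < INR k) by (apply lt_0_INR; lia).
      assert (E : rpow (INR k) (1 - p/2) * rpow (INR k) (p/2 - 1) = 1).
      { rewrite !rpow_pos by auto. rewrite <- Rpower_plus. replace (1 - p/2 + (p/2 - 1)) with 0 by ring.
        apply Rpower_O; auto. }
      pose proof (rpow_gt0 (INR k) (1 - p/2) Hk').
      assert (0 < 2 * P2 * (Mp + cp)) by nra.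
      apply Rmult_lt_reg_r with (2 * P2 * (Mp + cp) / cp).
      { apply Rdiv_lt_0_compat; auto. }
      replace (cp / (2 * P2 * (Mp + cp)) * (2 * P2 * (Mp + cp) / cp)) with 1 by (field; lra).
      apply Rlt_le_trans with (rpow (INR k) (1 - p/2) * rpow (INR k) (p/2 - 1)); [|lra].
      apply Rmult_lt_compat_l; auto. }
  destruct Hkex as [k [Hk1 [Hk2 Hk3]]].
  set (D := rpow (2 * INR k) p). assert (HD : 0 <= D) by apply rpow_ge0.
  set (CC := rpow (2 * INR k) p * rpow 2 p ^ k).
  assert (HCC : 0 <= CC) by (unfold CC; apply Rmult_le_pos; [apply rpow_ge0|apply pow_le, rpow_ge0]).
  set (eta0 := cp / (4 * P2 * (D + 1) * (CC + 1))).
  assert (Hden : 0 < 4 * P2 * (D + 1) * (CC + 1)) by (repeat apply Rmult_lt_0_compat; lra).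
  assert (Heta : 0 < eta0) by (unfold eta0; apply Rdiv_lt_0_compat; auto).
  assert (Heqe : (D + 1) * (CC + 1) * eta0 = cp / (4 * P2)).
  { unfold eta0. field. split; lra. }
  assert (HDe : D * eta0 <= cp / (4 * P2)).
  { rewrite <- Heqe. apply Rmult_le_compat_r; [lra|]. nra. }
  assert (HCe : CC * eta0 <= cp / (4 * P2)).
  { rewrite <- Heqe. apply Rmult_le_compat_r; [lra|]. nra. }
  assert (Hmex : exists m, (1 <= m)%nat /\
     forall a, (a < k)%nat -> Pl p (Kop w L (ebv (k*m - 1) (a*m))) <= eta0).
  { apply Classical_Prop.NNPP. intro Hn.
    assert (Hall : forall t, exists a, (a < k)%nat /\
        eta0 < Pl p (Kop w L (ebv (k * S t - 1) (a * S t)))).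
    { intros t. apply Classical_Prop.NNPP; intro Hn2. apply Hn. exists (S t). split; [lia|].
      intros a Ha. apply Rnot_lt_le. intro Hlt. apply Hn2. exists a; auto. }
    set (af := fun t => proj1_sig (constructive_indefinite_description _ (Hall t))).
    assert (Haf : forall t, (af t < k)%nat /\ eta0 < Pl p (Kop w L (ebv (k * S t - 1) (af t * S t)))).
    { intros t. unfold af. destruct (constructive_indefinite_description _ (Hall t)) as [a Ha]. exact Ha. }
    destruct (CL p w B L M (fun t => (k * S t - 1)%nat) (fun t => (af t * S t)%nat) H Hcomp)
      with (eta := eta0) as [t Ht]; auto.
    - intros t. nia.
    - intros t. pose proof (proj1 (Haf t)). nia.
    - pose proof (proj2 (Haf t)). lra. }
  destruct Hmex as [m [Hm1 Hm2]].
  destruct (main_est p w B L M c k m eta0 H Hc HcL Hk1 Hm1 ltac:(lra) Hm2) as [U1 U2].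
  rewrite sigma_eq in U1, U2 by auto. fold cp Mp P2 D in U1, U2. change (D * P2 ^ k) with CC in U1, U2.
  set (sg := rpow (INR k) (1 - p/2)) in *.
  assert (Hsg : 0 < sg) by (apply rpow_gt0, lt_0_INR; lia).
  destruct (Rtotal_order p 2) as [Hlt|[Heq|Hgt]]; [|congruence|].
  - specialize (Hk2 Hlt).
    assert (Hb : / P2 * cp / 4 <= / P2 * (cp - D * eta0) - CC * eta0).
    { assert (cp / (4 * P2) = / P2 * cp / 4) by (field; lra).
      assert (/ P2 * (cp / 2) <= / P2 * (cp - D * eta0)).
      { apply Rmult_le_compat_l; [left; apply Rinv_0_lt_compat; lra|].
        assert (cp / (4 * P2) <= cp / 4).
        { apply Rmult_le_compat_l; [lra|]. apply Rinv_le_contravar; lra. }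
        lra. }
      lra. }
    assert (sg * (/ P2 * cp / 4) <= Mp) by (eapply Rle_trans; [|apply U2]; apply Rmult_le_compat_l; lra).
    assert (4 * P2 * Mp / cp * (/ P2 * cp / 4) = Mp) by (field; lra).
    assert (0 < / P2 * cp / 4) by (apply Rmult_lt_0_compat; [apply Rmult_lt_0_compat; [apply Rinv_0_lt_compat; lra|auto]|lra]).
    nra.
  - specialize (Hk3 Hgt).
    assert (P2 * (Mp + CC * eta0) <= P2 * (Mp + cp)).
    { apply Rmult_le_compat_l; [lra|].
      assert (cp / (4 * P2) <= cp).
      { apply Rcomplements.Rle_div_l; nra. }
      lra. }
    assert (sg * (P2 * (Mp + CC * eta0)) <= sg * (P2 * (Mp + cp))) by (apply Rmult_le_compat_l; lra).
    assert (sg * (P2 * (Mp + cp)) < cp / (2 * P2 * (Mp + cp)) * (P2 * (Mp + cp))).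
    { apply Rmult_lt_compat_r; auto. nra. }
    assert (cp / (2 * P2 * (Mp + cp)) * (P2 * (Mp + cp)) = cp / 2) by (field; nra).
    lra.
Qed.
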